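(* Let $n\ge1$ and let $\mathbf{R}$ be a subalgebra of $\mathbf{P\L}_n\times\mathbf{P\L}_n$. Suppose $\mathbf{R}$ is not of the form $\mathbf{S}_1\times\mathbf{S}_2$ with $\mathbf{S}_1,\mathbf{S}_2$ subalgebras of $\mathbf{P\L}_n$. Then one of the following holds: - $\mathbf{R}\subseteq{\le}=\{(x,y):x\le y\}$; - $\mathbf{R}\subseteq{\ge}=\{(x,y):x\ge y\}$.
   Context: For $n\ge 1$, the algebra $\mathbf{P\L}_n=\langle\{0,\tfrac1n,\dots,\tfrac{n-1}{n},1\},\wedge,\vee,\odot,\oplus,0,1\rangle$ has $\wedge=\min$, $\vee=\max$, $x\odot y=\max\{0,x+y-1\}$ and $x\oplus y=\min\{1,x+y\}$. The order $\le$ is the usual numerical order. Binary relations on $\mathbf{P\L}_n$ are identified with subsets of $\mathbf{P\L}_n\times\mathbf{P\L}_n$, and operations on $\mathbf{P\L}_n\times\mathbf{P\L}_n$ are computed componentwise. *)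

(* Defs.v *)
From mathcomp Require Import all_boot.
Set Implicit Arguments. Unset Strict Implicit. Unset Printing Implicit Defensive.

(* The MV-chain PL_n = {0, 1/n, ..., 1} is encoded as 'I_n.+1:
   the ordinal k stands for the rational k/n.  Operations are the
   Lukasiewicz ones scaled by n. *)
Definition PL (n : nat) : finType := 'I_n.+1.

Section PLops.
Variable n : nat.
Definition pl_zero : PL n := ord0.
Definition pl_one : PL n := ord_max.
Definition pl_meet (x y : PL n) : PL n := inord (minn x y).
Definition pl_join (x y : PL n) : PL n := inord (maxn x y).
(* x (.) y = max{0, x + y - 1}  ~~>  (x + y) - n  (truncated) *)
Definition pl_odot (x y : PL n) : PL n := inord ((x + y) - n).
(* x (+) y = min{1, x + y}  ~~>  min(n, x + y) *)
Definition pl_oplus (x y : PL n) : PL n := inord (minn n (x + y)).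

Definition pl_subalg (S : {set PL n}) : Prop :=
  [/\ pl_zero \in S, pl_one \in S &
   forall x y, x \in S -> y \in S ->
     [/\ pl_meet x y \in S, pl_join x y \in S,
         pl_odot x y \in S & pl_oplus x y \in S]].

Definition pl2_subalg (R : {set PL n * PL n}) : Prop :=
  [/\ (pl_zero, pl_zero) \in R, (pl_one, pl_one) \in R &
   forall p q, p \in R -> q \in R ->
     [/\ (pl_meet p.1 q.1, pl_meet p.2 q.2) \in R,
         (pl_join p.1 q.1, pl_join p.2 q.2) \in R,
         (pl_odot p.1 q.1, pl_odot p.2 q.2) \in R &
         (pl_oplus p.1 q.1, pl_oplus p.2 q.2) \in R]].
End PLops.

(* Main.v *)
Require Import Defs.
From mathcomp Require Import all_boot.
From mathcomp Require Import zify.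

Lemma val_oplus n (x y : PL n) : nat_of_ord (pl_oplus x y) = minn n (x + y).
Proof. by rewrite /pl_oplus inordK // ltnS geq_minl. Qed.
Lemma val_odot n (x y : PL n) : nat_of_ord (pl_odot x y) = x + y - n.
Proof. rewrite /pl_odot inordK //; have := ltn_ord x; have := ltn_ord y; lia. Qed.
Lemma val_meet n (x y : PL n) : nat_of_ord (pl_meet x y) = minn x y.
Proof. rewrite /pl_meet inordK //; have := ltn_ord x; have := ltn_ord y; lia. Qed.
Lemma val_join n (x y : PL n) : nat_of_ord (pl_join x y) = maxn x y.
Proof. rewrite /pl_join inordK //; have := ltn_ord x; have := ltn_ord y; lia. Qed.

Lemma key n (R : {set PL n * PL n}) :
 (forall p, p \in R -> (pl_oplus p.1 p.1, pl_oplus p.2 p.2) \in R) ->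
 (forall p, p \in R -> (pl_odot p.1 p.1, pl_odot p.2 p.2) \in R) ->
 forall k (p : PL n * PL n), p \in R -> p.1 < p.2 ->
   2 * (n - (p.2 - p.1)) + (0 < p.1) <= k -> (pl_zero n, pl_one n) \in R.
Proof.
move=> Hp Hd k; elim: k => [|k IH] [x y] /= pR lt m;
  (have [/andP[/eqP x0 /eqP yn]|ne] := boolP ((nat_of_ord x == 0) && (nat_of_ord y == n)));
  try (have -> : (pl_zero n, pl_one n) = (x, y) by
       congr pair; apply: val_inj => //=; rewrite yn);
  try exact pR.
  all: move: ne; rewrite negb_and => /orP ne; have := ltn_ord x; have := ltn_ord y.
- move=> *; lia.
- move=> hy hx.
  case: (ltnP (x + y) n) => h.
  + apply: (IH (pl_oplus x x, pl_oplus y y)); first by apply: (Hp (x, y)).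
    * rewrite /= !val_oplus; lia.
    * rewrite /= !val_oplus; lia.
  + apply: (IH (pl_odot x x, pl_odot y y)); first by apply: (Hd (x, y)).
    * rewrite /= !val_odot; lia.
    * rewrite /= !val_odot; lia.
Qed.

Theorem lemma3p8 (n : nat) (hn : 1 <= n) (R : {set PL n * PL n}) :
  pl2_subalg R ->
  ~ (exists S1 S2 : {set PL n},
       [/\ pl_subalg S1, pl_subalg S2 & R = setX S1 S2]) ->
  (forall p, p \in R -> (p.1 <= p.2)%N) \/
  (forall p, p \in R -> (p.2 <= p.1)%N).
Proof.
move=> [R0 R1 Hcl] Hnot.
have Hp : forall p, p \in R -> (pl_oplus p.1 p.1, pl_oplus p.2 p.2) \in R.
  by move=> p pR; have [] := Hcl p p pR pR.
have Hd : forall p, p \in R -> (pl_odot p.1 p.1, pl_odot p.2 p.2) \in R.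
  by move=> p pR; have [] := Hcl p p pR pR.
case: (boolP [exists p in R, p.2 < p.1]) => [/exists_inP [q qR q21]| /exists_inP nq];
  last first.
  left=> p pR; rewrite leqNgt; apply/negP => h; apply: nq; by exists p.
case: (boolP [exists p in R, p.1 < p.2]) => [/exists_inP [r rR r12]| /exists_inP nr];
  last first.
  right=> p pR; rewrite leqNgt; apply/negP => h; apply: nr; by exists p.
have H01 : (pl_zero n, pl_one n) \in R.
  by apply: (@key n R Hp Hd (2 * n + 1) r rR r12); lia.
pose R' := [set p : PL n * PL n | (p.2, p.1) \in R].
have H10' : (pl_zero n, pl_one n) \in R'.
  apply: (@key n R' _ _ (2 * n + 1) (q.2, q.1)).
  - by move=> p; rewrite !inE => /Hp.
  - by move=> p; rewrite !inE => /Hd.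
  - by rewrite inE -surjective_pairing.
  - by [].
  - simpl; lia.
have H10 : (pl_one n, pl_zero n) \in R by move: H10'; rewrite inE.
exfalso; apply: Hnot.
exists [set p.1 | p in R], [set p.2 | p in R]; split.
- split; first by apply/imsetP; exists (pl_zero n, pl_zero n).
  + by apply/imsetP; exists (pl_one n, pl_one n).
  + move=> x y /imsetP[p pR ->] /imsetP[r' rR' ->].
    have [h1 h2 h3 h4] := Hcl p r' pR rR'.
    split; apply/imsetP; [exists (pl_meet p.1 r'.1, pl_meet p.2 r'.2)|exists (pl_join p.1 r'.1, pl_join p.2 r'.2)|exists (pl_odot p.1 r'.1, pl_odot p.2 r'.2)|exists (pl_oplus p.1 r'.1, pl_oplus p.2 r'.2)] => //.
- split; first by apply/imsetP; exists (pl_zero n, pl_zero n).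
  + by apply/imsetP; exists (pl_one n, pl_one n).
  + move=> x y /imsetP[p pR ->] /imsetP[r' rR' ->].
    have [h1 h2 h3 h4] := Hcl p r' pR rR'.
    split; apply/imsetP; [exists (pl_meet p.1 r'.1, pl_meet p.2 r'.2)|exists (pl_join p.1 r'.1, pl_join p.2 r'.2)|exists (pl_odot p.1 r'.1, pl_odot p.2 r'.2)|exists (pl_oplus p.1 r'.1, pl_oplus p.2 r'.2)] => //.
- apply/setP => -[x y]; rewrite inE /=; apply/idP/andP.
  + by move=> h; split; apply/imsetP; exists (x, y).
  + case=> /imsetP[p pR ->] /imsetP[s sR ->].
    have [u _ _ _] := Hcl p (pl_one n, pl_zero n) pR H10.
    have [v _ _ _] := Hcl s (pl_zero n, pl_one n) sR H01.
    have [_ w _ _] := Hcl _ _ u v.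
    move: w => /=.
    have -> : (pl_join (pl_meet p.1 (pl_one n)) (pl_meet s.1 (pl_zero n)),
               pl_join (pl_meet p.2 (pl_zero n)) (pl_meet s.2 (pl_one n)))
              = (p.1, s.2); last by [].
    have := ltn_ord p.1; have := ltn_ord s.2.
    by move=> h1 h2; congr pair; apply: val_inj; rewrite /= !val_join !val_meet /pl_one /pl_zero /=; rewrite ?minn0 ?min0n ?maxn0 ?max0n; apply/minn_idPl; rewrite -ltnS; exact: ltn_ord.
Qed.
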